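(* Let $(R,\mathcal{T})$ and $(S,\widetilde{\mathcal{T}})$ be transverse CEERs on a compact, metrizable, zero-dimensional space $X$, and give $R\vee S$ the étale topology transferred from $R\times_XS$ via $((x,y),(y,z))\mapsto(x,z)$. Then: (i) if $(x,y)\in R$, then $\#([x]_S)=\#([y]_S)$; (ii) if $\mathcal{O}'$ is a groupoid partition of $R\vee S$ finer than the clopen partition $\{\Delta,\,R\setminus\Delta,\,S\setminus\Delta,\,(R\vee S)\setminus(R\cup S)\}$ (where $\Delta=\Delta_X$), then for every $U\in\mathcal{O}'$ there are unique elements $U_R,U_S,V_R,V_S\in\mathcal{O}'$ with $U_R,V_R\subset R$, $U_S,V_S\subset S$ and $U=U_R\cdot U_S=V_S\cdot V_R$; moreover $\mathcal{O}'\cap R=\{U\in\mathcal{O}':U\subset R\}$ and $\mathcal{O}'\cap S$ are groupoid partitions of $R$ and $S$, respectively.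
   Context: An étale equivalence relation on $X$ is a countable equivalence relation $R\subset X\times X$ with a locally compact, Hausdorff, second countable topology in which the product of composable pairs is continuous, the inverse is a homeomorphism, and $r(x,y)=x$ is a local homeomorphism; a CEER is a compact étale equivalence relation. $[x]_S$ is the $S$-class of $x$. $R\times_XS=\{((x,y),(y,z)):(x,y)\in R,(y,z)\in S\}$ with the relative product topology; $R$ and $S$ are transverse if $R\cap S=\Delta_X$ and there is a homeomorphism $h:R\times_XS\to S\times_XR$ with $r\circ h=r$, $s\circ h=s$ (where $r((x,y),(y,z))=x$, $s((x,y),(y,z))=z$); then $((x,y),(y,z))\mapsto(x,z)$ is a bijection onto the equivalence relation $R\vee S$ generated by $R$ and $S$. For subsets $U,V$ of an equivalence relation, $U\cdot V=\{(x,z):(x,y)\in U,(y,z)\in V\text{ for some }y\}$ and $U^{-1}=\{(y,x):(x,y)\in U\}$. A groupoid partition of a CEER $R$ is a finite clopen partition $\mathcal{O}'$ of $R$ such that: $\mathcal{O}'$ is finer than $\{\Delta,R\setminus\Delta\}$; for each $U\in\mathcal{O}'$ the maps $r,s$ restricted to $U$ are homeomorphisms onto their images, and if $U\subset R\setminus\Delta$ then $r(U)\cap s(U)=\emptyset$; for all $U,V\in\mathcal{O}'$ either $U\cdot V=\emptyset$ or $U\cdot V\in\mathcal{O}'$; and $U^{-1}\in\mathcal{O}'$ for every $U\in\mathcal{O}'$. *)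

(* Defs.v *)
From HB Require Import structures.
From mathcomp Require Import all_boot all_order all_algebra.
From mathcomp Require Import all_classical all_reals all_analysis.
Set Implicit Arguments. Unset Strict Implicit. Unset Printing Implicit Defensive.
Import Order.TTheory GRing.Theory Num.Theory.
Local Open Scope classical_set_scope.
Local Open Scope ring_scope.

Definition metrizable (X : topologicalType) : Prop :=
  exists (K : realType) (d : X -> X -> K),
    [/\ (forall x y, d x y = 0 <-> x = y),
        (forall x y, d x y = d y x),
        (forall x y z, d x z <= d x y + d y z) &
        (forall A : set X, open A <->
           (forall x, A x -> exists2 e : K, 0 < e & [set y | d x y < e] `<=` A))].

Definition zero_dim (X : topologicalType) : Prop :=
  forall (A : set X) (x : X), open A -> A x ->
    exists B : set X, [/\ clopen B, B x & B `<=` A].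

Definition diag (X : Type) : set (X * X) := [set p | p.1 = p.2].
Arguments diag X : clear implicits.

Definition rcomp (X : Type) (U V : set (X * X)) : set (X * X) :=
  [set p | exists y, U (p.1, y) /\ V (y, p.2)].
Definition rinv (X : Type) (U : set (X * X)) : set (X * X) :=
  [set p | U (p.2, p.1)].

Definition eqrel_on (X : Type) (E : set (X * X)) : Prop :=
  [/\ (forall x, E (x, x)),
      (forall x y, E (x, y) -> E (y, x)) &
      (forall x y z, E (x, y) -> E (y, z) -> E (x, z))].

Definition gen_eqrel (X : Type) (A : set (X * X)) : set (X * X) :=
  [set p | forall E : set (X * X), eqrel_on E -> A `<=` E -> E p].

Definition eqclass (X : Type) (E : set (X * X)) (x : X) : set X :=
  [set y | E (x, y)].

Definition rel_open (T : topologicalType) (A P : set T) : Prop :=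
  exists O : set T, open O /\ P = O `&` A.

Definition rel_clopen (T : topologicalType) (A P : set T) : Prop :=
  [/\ P `<=` A, rel_open A P & rel_open A (A `\` P)].

Definition homeo_onto_image (T T' : topologicalType) (A : set T) (f : T -> T')
  : Prop :=
  [/\ {in A &, injective f}, {within A, continuous f} &
      (forall V, V `<=` A -> rel_open A V -> rel_open (f @` A) (f @` V))].

Definition local_homeo (T T' : topologicalType) (f : T -> T') : Prop :=
  forall g : T, exists U : set T,
    [/\ open U, U g, {in U &, injective f}, {within U, continuous f} &
        forall V, open V -> V `<=` U -> open (f @` V)].

(* A relation R on X with a topology is encoded by a topological space G
   together with an injection iota : G -> X * X whose image is R; the
   topology of R is the one transported from G. *)

Definition composable (X : Type) (G : Type) (iota : G -> X * X) : set (G * G) :=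
  [set p | (iota p.1).2 = (iota p.2).1].

Definition etale_eqrel (X G : topologicalType) (iota : G -> X * X) : Prop :=
  [/\ injective iota,
      eqrel_on (range iota) /\ (forall x, countable (eqclass (range iota) x)),
      locally_compact [set: G] /\ hausdorff_space G /\ @second_countable G,
      (exists mul : G -> G -> G,
         (forall a b, (iota a).2 = (iota b).1 ->
            iota (mul a b) = ((iota a).1, (iota b).2)) /\
         {within composable iota, continuous (fun p : G * G => mul p.1 p.2)}) /\
      (exists inv : G -> G,
         (forall a, iota (inv a) = ((iota a).2, (iota a).1)) /\
         continuous inv /\ cancel inv inv) &
      local_homeo (fun g => (iota g).1)].

Definition CEER (X G : topologicalType) (iota : G -> X * X) : Prop :=
  etale_eqrel iota /\ compact [set: G].

Section Fibered.
Context {X GR GS : topologicalType} (iR : GR -> X * X) (iS : GS -> X * X).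

(* R x_X S as a subset of GR * GS (relative product topology) *)
Definition fibprod : set (GR * GS) := [set p | (iR p.1).2 = (iS p.2).1].
Definition fr (p : GR * GS) : X := (iR p.1).1.
Definition fs (p : GR * GS) : X := (iS p.2).2.
Definition fibmul (p : GR * GS) : X * X := (fr p, fs p).
End Fibered.

Definition transverse (X GR GS : topologicalType)
  (iR : GR -> X * X) (iS : GS -> X * X) : Prop :=
  range iR `&` range iS = diag X /\
  exists (h : GR * GS -> GS * GR) (k : GS * GR -> GR * GS),
    [/\ (forall p, fibprod iR iS p -> fibprod iS iR (h p)),
        (forall q, fibprod iS iR q -> fibprod iR iS (k q)),
        (forall p, fibprod iR iS p -> k (h p) = p) /\
        (forall q, fibprod iS iR q -> h (k q) = q),
        ({within fibprod iR iS, continuous h} /\ {within fibprod iS iR, continuous k}) &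
        (forall p, fibprod iR iS p ->
           fr iS (h p) = fr iR p /\ fs iR (h p) = fs iS p)].

(* E is the equivalence relation; its topology is transported from the
   subspace D of G via iota (iota is a bijection from D onto E). *)
Definition groupoid_partition (X G : topologicalType) (E : set (X * X))
  (iota : G -> X * X) (D : set G) (O : set (set (X * X))) : Prop :=
  [/\
      finite_set O /\ (forall U, O U -> U !=set0) /\
      (forall U V, O U -> O V -> U `&` V !=set0 -> U = V) /\
      \bigcup_(U in O) U = E,
      (forall U, O U -> rel_clopen D (D `&` iota @^-1` U)),
      (forall U, O U -> U `<=` diag X \/ U `<=` E `\` diag X),
      (forall U, O U ->
         homeo_onto_image (D `&` iota @^-1` U) (fun g => (iota g).1) /\
         homeo_onto_image (D `&` iota @^-1` U) (fun g => (iota g).2)) /\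
      (forall U, O U -> U `<=` E `\` diag X ->
         (fst @` U) `&` (snd @` U) = set0) &
      (forall U V, O U -> O V -> rcomp U V = set0 \/ O (rcomp U V)) /\
      (forall U, O U -> O (rinv U))].

(* Main.v *)
Require Import Defs.
From HB Require Import structures.
From mathcomp Require Import all_boot all_order all_algebra.
From mathcomp Require Import all_classical all_reals all_analysis.
Set Implicit Arguments. Unset Strict Implicit. Unset Printing Implicit Defensive.
Local Open Scope classical_set_scope.

Lemma r_cont (X G : topologicalType) (iota : G -> X * X) :
  etale_eqrel iota -> continuous (fun g => (iota g).1).
Proof.
case=> _ _ _ _ lh g; have [U [oU Ug _ cU _]] := lh g.
move: cU; rewrite continuous_open_subspace // => cU.
exact: cU (mem_set Ug).
Qed.

Lemma t_cont (X G : topologicalType) (iota : G -> X * X) :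
  etale_eqrel iota -> continuous (fun g => (iota g).2).
Proof.
move=> E; have rc := r_cont E.
case: E => _ _ _ [_ [inv [iinv [cinv _]]]] _.
have -> : (fun g => (iota g).2) = (fun g => (iota g).1) \o inv.
  by apply: funext => g /=; rewrite iinv.
move=> g; apply: continuous_comp; [exact: cinv | exact: rc].
Qed.

Lemma cvg_into_within (T U : topologicalType) (f : T -> U) (A : set U) x :
  {for x, continuous f} -> (forall y, A (f y)) -> f @ nbhs x --> within A (nbhs (f x)).
Proof.
move=> cf Af P /= hP.
have H : nbhs x (fun y => A (f y) -> P (f y)) := cf _ hP.
by apply: filterS H => y /= hy; exact: hy (Af y).
Qed.

Lemma unit_cont (X G : topologicalType) (iota : G -> X * X) :
  etale_eqrel iota -> exists u : X -> G, continuous u /\ forall x, iota (u x) = (x, x).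
Proof.
move=> E; have rc := r_cont E.
case: E => iinj [[erefl0 _ _] _] _ [[mul [imul cmul]] [inv [iinv [cinv invK]]]] lh.
have refl x : exists g, iota g = (x, x).
  by have [g _ <-] := erefl0 x; exists g.
have [u hu] := choice refl.
exists u; split => // x.
pose m g := mul g (inv g).
have hm g : m g = u ((iota g).1).
  by apply: iinj; rewrite imul ?iinv //= hu.
have mc : continuous m.
  move=> g.
  have c1 : (fun g => (g, inv g)) @ nbhs g --> within (composable iota) (nbhs (g, inv g)).
    apply: cvg_into_within; last by move=> y; rewrite /composable /= iinv.
    by apply: cvg_pair => //; exact: cinv.
  have c2 := (subspace_continuousP _ _).1 cmul (g, inv g).
  have c3 : composable iota (g, inv g) by rewrite /composable /= iinv.
  exact: (cvg_comp _ _ c1 (c2 c3)).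
move=> N /= hN.
set g0 := u x.
have rg0 : (iota g0).1 = x by rewrite hu.
have hmN : nbhs g0 (m @^-1` N).
  by apply: mc; rewrite hm rg0.
have [W [oW Wg0 _ _ opW]] := lh g0.
rewrite nbhsE in hmN; case: hmN => M [oM Mg0] MN.
have oi : open ((fun g => (iota g).1) @` (M `&` W)).
  by apply: opW; [exact: openI | exact: subIsetr].
have : nbhs x ((fun g => (iota g).1) @` (M `&` W)).
  apply: open_nbhs_nbhs; split => //; exists g0 => //.
apply: filterS => _ [v [Mv Wv] <-] /=.
by rewrite -hm; exact: MN.
Qed.

Section Transfer.
Context (X Gf G : topologicalType) (D : set Gf) (mu : Gf -> X * X)
  (iota : G -> X * X) (phi : G -> Gf) (psi : Gf -> G) (U : set (X * X)).
Hypotheses (cphi : continuous phi) (cpsi : continuous psi)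
  (Dphi : forall g, D (phi g)) (psiphi : forall g, psi (phi g) = g)
  (muphi : forall g, mu (phi g) = iota g)
  (phipsi : forall p, D p -> U (mu p) -> phi (psi p) = p).

Let A' := D `&` mu @^-1` U.
Let A := [set: G] `&` iota @^-1` U.

Lemma inA' g : A' (phi g) <-> U (iota g).
Proof. by rewrite /A' /= muphi; split => [[]|] //. Qed.

Lemma transfer_clopen : rel_clopen D A' -> rel_clopen [set: G] A.
Proof.
move=> [] _ [Q1 [oQ1 e1]] [Q2 [oQ2 e2]]; split => //.
- exists (phi @^-1` Q1); split; first exact: (continuousP phi).1 cphi _ oQ1.
  apply/seteqP; split => g /=.
    by move=> [_ Ug]; have := (inA' g).2 Ug; rewrite e1 => -[].
  by move=> [Q1g _]; split => //; apply/(inA' g); rewrite e1; split.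
- exists (phi @^-1` Q2); split; first exact: (continuousP phi).1 cphi _ oQ2.
  apply/seteqP; split => g /=.
    move=> [_ nA]; have : (D `\` A') (phi g).
      by split => //; move/(inA' g) => Ug; apply: nA.
    by rewrite e2 => -[].
  move=> [Q2g _]; split => // -[_ Ug].
  have : (Q2 `&` D) (phi g) by [].
  by rewrite -e2 => -[_]; apply; apply/(inA' g).
Qed.

Lemma img_transfer (f : X * X -> X) (O : set G) :
  (fun p => f (mu p)) @` (psi @^-1` O `&` A') = (fun g => f (iota g)) @` (O `&` A).
Proof.
apply/seteqP; split => y.
  move=> [p [Op [Dp Up]] <-]; exists (psi p).
    by split => //; split => //=; rewrite -muphi phipsi.
  by rewrite -muphi phipsi.
move=> [g [Og [_ Ug]] <-]; exists (phi g); last by rewrite muphi.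
by split; [rewrite /= psiphi | apply/inA'].
Qed.

Lemma transfer_homeo (f : X * X -> X) :
  continuous (fun g => f (iota g)) ->
  homeo_onto_image A' (fun p => f (mu p)) ->
  homeo_onto_image A (fun g => f (iota g)).
Proof.
move=> cf [inj _ op]; split.
- move=> g g' /set_mem [_ Ug] /set_mem [_ Ug'] e.
  rewrite -(psiphi g) -(psiphi g'); congr psi.
  apply: inj; rewrite ?inE; try exact/inA'.
  by rewrite !muphi.
- exact: continuous_subspaceT.
- move=> V VA [Q [oQ ->]].
  have := op (psi @^-1` Q `&` A') (@subIsetr _ _ _) _.
  rewrite img_transfer.
  have -> : (fun p => f (mu p)) @` A' = (fun g => f (iota g)) @` A.
    by rewrite -[A']setTI -[A in RHS]setTI -img_transfer.
  apply; exists (psi @^-1` Q); split => //.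
  exact: (continuousP psi).1 cpsi _ oQ.
Qed.
End Transfer.

Section Alg.
Context (X : Type).

Lemma uniq_mid (A B : set (X * X)) :
  eqrel_on A -> eqrel_on B -> A `&` B = diag X ->
  forall x y y' z, A (x, y) -> B (y, z) -> A (x, y') -> B (y', z) -> y = y'.
Proof.
move=> [_ sA tA] [_ sB tB] AB x y y' z Axy Byz Axy' By'z.
have : (A `&` B) (y, y').
  by split; [apply: tA (sA _ _ Axy) Axy' | apply: tB Byz (sB _ _ By'z)].
by rewrite AB.
Qed.

Lemma gen_char (R S : set (X * X)) :
  eqrel_on R -> eqrel_on S ->
  (forall x y z, S (x, y) -> R (y, z) -> exists w, R (x, w) /\ S (w, z)) ->
  forall x z, gen_eqrel (R `|` S) (x, z) <-> exists y, R (x, y) /\ S (y, z).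
Proof.
move=> [rR sR tR] [rS sS tS] SR x z; split.
  move=> /(_ [set p | exists y, R (p.1, y) /\ S (y, p.2)]); apply.
    split.
    - by move=> a; exists a.
    - move=> a b [c [Rac Scb]] /=.
      have [w [Rbw Swa]] := SR _ _ _ (sS _ _ Scb) (sR _ _ Rac).
      by exists w.
    - move=> a b c [d [Rad Sdb]] [e [Rbe Sec]] /=.
      have [w [Rdw Swe]] := SR _ _ _ Sdb Rbe.
      by exists w; split; [exact: tR Rad Rdw | exact: tS Swe Sec].
  move=> [a b] /= [Rab|Sab]; first by exists b.
  by exists a.
move=> [y [Rxy Syz]] E [_ _ tE] sub.
by apply: (tE _ y); apply: sub; [left|right].
Qed.

Lemma decomp (E A B : set (X * X)) (O : set (set (X * X))) :
  (forall U, O U -> U !=set0) ->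
  (forall U V, O U -> O V -> U `&` V !=set0 -> U = V) ->
  \bigcup_(U in O) U = E ->
  (forall U V, O U -> O V -> rcomp U V = set0 \/ O (rcomp U V)) ->
  (forall W p, O W -> W p -> A p -> W `<=` A) ->
  (forall W p, O W -> W p -> B p -> W `<=` B) ->
  (forall x z, E (x, z) -> exists y, A (x, y) /\ B (y, z)) ->
  (forall x y y' z, A (x, y) -> B (y, z) -> A (x, y') -> B (y', z) -> y = y') ->
  A `<=` E -> B `<=` E ->
  forall U, O U ->
    exists UR US,
      [/\ O UR, O US, UR `<=` A, US `<=` B & U = rcomp UR US] /\
      forall UR' US',
        [/\ O UR', O US', UR' `<=` A, US' `<=` B & U = rcomp UR' US'] ->
        UR' = UR /\ US' = US.
Proof.
move=> ne dis cov cl HA HB dec um AE BE U OU.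
have [[x z] Uxz] := ne U OU.
have Exz : E (x, z) by rewrite -cov; exists U.
have [y [Axy Byz]] := dec _ _ Exz.
have : E (x, y) by apply: AE.
rewrite -cov => -[UR OUR URxy].
have : E (y, z) by apply: BE.
rewrite -cov => -[US OUS USyz].
have URA := HA _ _ OUR URxy Axy.
have USB := HB _ _ OUS USyz Byz.
have cxz : rcomp UR US (x, z) by exists y.
have eq : U = rcomp UR US.
  case: (cl _ _ OUR OUS) => [e|Oc]; first by move: cxz; rewrite e.
  by apply: dis => //; exists (x, z).
exists UR, US; split => //.
move=> UR' US' [OUR' OUS' A' B' e'].
have : rcomp UR' US' (x, z) by rewrite -e'.
case=> y' /= [h1 h2].
have yy := um _ _ _ _ Axy Byz (A' _ h1) (B' _ h2); subst y'.
by split; apply: dis => //; [exists (x, y) | exists (y, z)].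
Qed.
End Alg.

Lemma restrict (X Gf G : topologicalType) (D : set Gf) (mu : Gf -> X * X)
  (E A : set (X * X)) (iota : G -> X * X) (phi : G -> Gf) (psi : Gf -> G)
  (O : set (set (X * X))) :
  groupoid_partition E mu D O ->
  eqrel_on A -> A `<=` E ->
  (forall W p, O W -> W p -> A p -> W `<=` A) ->
  continuous phi -> continuous psi -> (forall g, D (phi g)) ->
  (forall g, psi (phi g) = g) -> (forall g, mu (phi g) = iota g) ->
  (forall p, D p -> A (mu p) -> phi (psi p) = p) ->
  continuous (fun g => (iota g).1) -> continuous (fun g => (iota g).2) ->
  groupoid_partition A iota [set: G] [set U | O U /\ U `<=` A].
Proof.
move=> [[fin [ne [dis cov]]] clo finer [hom disj] [cl inv]] [rA sA tA] AE HA
  cphi cpsi Dphi psiphi muphi phipsi c1 c2.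
split.
- split; first by apply: sub_finite_set fin => U [].
  split; first by move=> U [OU _]; exact: ne.
  split; first by move=> U V [OU _] [OV _]; exact: dis.
  apply/seteqP; split => [p [U [_ UA] Up]|p Ap]; first exact: UA.
  have : E p by apply: AE.
  rewrite -cov => -[W OW Wp]; exists W => //; split => //.
  exact: HA _ _ OW Wp Ap.
- move=> U [OU UA].
  by apply: transfer_clopen cphi Dphi muphi _; exact: clo.
- move=> U [OU UA]; case: (finer U OU) => [h|h]; first by left.
  by right => q Uq; split; [exact: UA | exact: (h q Uq).2].
- split.
  + move=> U [OU UA]; have [h1 h2] := hom U OU.
    have pp : forall p, D p -> U (mu p) -> phi (psi p) = p.
      by move=> p Dp Up; apply: phipsi => //; exact: UA.
    split; [exact: (transfer_homeo cpsi Dphi psiphi muphi pp c1 h1) |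
            exact: (transfer_homeo cpsi Dphi psiphi muphi pp c2 h2)].
  + move=> U [OU UA] UAd; apply: disj => // q Uq.
    by have [Aq nd] := UAd q Uq; split; [exact: AE | exact: nd].
- split.
  + move=> U V [OU UA] [OV VA]; case: (cl U V OU OV) => [->|Oc]; first by left.
    right; split => // -[x z] [y /= [Uxy Vyz]].
    exact: tA (UA _ Uxy) (VA _ Vyz).
  + move=> U [OU UA]; split; first exact: inv.
    by move=> [x y] /= Uyx; apply: sA; exact: UA _ Uyx.
Qed.

Lemma cls_le (X : Type) (R S : set (X * X)) :
  eqrel_on R -> eqrel_on S -> R `&` S = diag X ->
  (forall x y z, R (x, y) -> S (y, z) -> exists w, S (x, w) /\ R (w, z)) ->
  forall a b, R (a, b) -> (eqclass S b #<= eqclass S a)%card.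
Proof.
move=> [rR sR tR] [rS sS tS] RS RSSR a b Rab.
have ex z : exists w, S (b, z) -> S (a, w) /\ R (w, z).
  case: (pselect (S (b, z))) => [Sbz|nS]; last by exists z.
  by have [w hw] := RSSR _ _ _ Rab Sbz; exists w.
have [f hf] := choice ex.
have inj : {in eqclass S b &, injective f}.
  move=> z z' /set_mem Sbz /set_mem Sbz' e.
  have [_ R1] := hf z Sbz; have [_ R2] := hf z' Sbz'.
  rewrite e in R1.
  have : (R `&` S) (z, z').
    by split; [exact: tR (sR _ _ R1) R2 | exact: tS (sS _ _ Sbz) Sbz'].
  by rewrite RS.
rewrite -(card_le_eql (inj_card_eq inj)).
apply: subset_card_le => _ [z Sbz <-].
by have [] := hf z Sbz.
Qed.

Lemma RS_SR (X GR GS : topologicalType) (iR : GR -> X * X) (iS : GS -> X * X) :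
  transverse iR iS ->
  forall x y z, range iR (x, y) -> range iS (y, z) ->
    exists w, range iS (x, w) /\ range iR (w, z).
Proof.
move=> [_ [h [k [H1 H2 _ _ H5]]]] x y z [g _ eg] [s _ es].
have fp : fibprod iR iS (g, s) by rewrite /fibprod /= eg es.
have F := H1 _ fp; have [e1 e2] := H5 _ fp.
move: F e1 e2; rewrite /fibprod /fr /fs /= eg es /= => F e1 e2.
exists (iS (h (g, s)).1).2; split.
  by exists (h (g, s)).1 => //; rewrite [LHS]surjective_pairing e1.
by exists (h (g, s)).2 => //; rewrite [LHS]surjective_pairing e2 F.
Qed.

Lemma SR_RS (X GR GS : topologicalType) (iR : GR -> X * X) (iS : GS -> X * X) :
  transverse iR iS ->
  forall x y z, range iS (x, y) -> range iR (y, z) ->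
    exists w, range iR (x, w) /\ range iS (w, z).
Proof.
move=> [_ [h [k [H1 H2 [hk kh] _ H5]]]] x y z [s _ es] [g _ eg].
have fq : fibprod iS iR (s, g) by rewrite /fibprod /= eg es.
have F := H2 _ fq.
have [e1 e2] := H5 _ F.
rewrite kh // /fr /fs /= es eg /= in e1 e2.
move: F; rewrite /fibprod => F.
exists (iR (k (s, g)).1).2; split.
  by exists (k (s, g)).1 => //; rewrite [LHS]surjective_pairing e1.
by exists (k (s, g)).2 => //; rewrite [LHS]surjective_pairing e2 F.
Qed.

Unset Implicit Arguments.
Theorem lemma3p4 (X GR GS : topologicalType)
  (iR : GR -> X * X) (iS : GS -> X * X) :
  compact [set: X] -> metrizable X -> zero_dim X ->
  CEER iR -> CEER iS -> transverse iR iS ->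
  (* (i) *)
  (forall x y : X, range iR (x, y) ->
     (eqclass (range iS) x #= eqclass (range iS) y)%card) /\
  (* (ii) *)
  (forall O : set (set (X * X)),
     groupoid_partition (gen_eqrel (range iR `|` range iS))
       (fibmul iR iS) (fibprod iR iS) O ->
     (forall U, O U ->
        U `<=` diag X \/ U `<=` range iR `\` diag X \/
        U `<=` range iS `\` diag X \/
        U `<=` gen_eqrel (range iR `|` range iS) `\` (range iR `|` range iS)) ->
     (forall U, O U ->
        (exists UR US,
           [/\ O UR, O US, UR `<=` range iR, US `<=` range iS & U = rcomp UR US] /\
           forall UR' US',
             [/\ O UR', O US', UR' `<=` range iR, US' `<=` range iS &
                 U = rcomp UR' US'] -> UR' = UR /\ US' = US) /\
        (exists VS VR,
           [/\ O VS, O VR, VS `<=` range iS, VR `<=` range iR & U = rcomp VS VR] /\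
           forall VS' VR',
             [/\ O VS', O VR', VS' `<=` range iS, VR' `<=` range iR &
                 U = rcomp VS' VR'] -> VS' = VS /\ VR' = VR)) /\
     groupoid_partition (range iR) iR [set: GR] [set U | O U /\ U `<=` range iR] /\
     groupoid_partition (range iS) iS [set: GS] [set U | O U /\ U `<=` range iS]).
Proof.
move=> _ _ _ [ER _] [ES _] T.
have RSSR := RS_SR T; have SRRS := SR_RS T.
have RSd : range iR `&` range iS = diag X by case: T.
have SRd : range iS `&` range iR = diag X by rewrite setIC.
have eR : eqrel_on (range iR) by case: ER => _ [].
have eS : eqrel_on (range iS) by case: ES => _ [].
have iRinj : injective iR by case: ER.
have iSinj : injective iS by case: ES.
case: (eR) => rR sR tR; case: (eS) => rS sS tS.
split.
  move=> x y Rxy; apply: Cantor_Bernstein.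
    by apply: (cls_le eR eS RSd RSSR); exact: sR.
  exact: (cls_le eR eS RSd RSSR).
move=> O GP finer.
have [[fin [ne [dis cov]]] clo fnr [hom disj] [cl inv]] := GP.
have gchar := gen_char eR eS SRRS.
have RE : range iR `<=` gen_eqrel (range iR `|` range iS).
  by move=> p Rp E _ sub; apply: sub; left.
have SE : range iS `<=` gen_eqrel (range iR `|` range iS).
  by move=> p Sp E _ sub; apply: sub; right.
have HAR : forall W p, O W -> W p -> range iR p -> W `<=` range iR.
  move=> W p OW Wp Rp q Wq; case: (finer W OW) => [hd|[hR|[hS|hG]]].
  - by move: (hd q Wq); case: q {Wq} => a b; rewrite /diag /= => ->; exact: rR.
  - exact: (hR q Wq).1.
  - by have [Sp ndp] := hS p Wp; exfalso; apply: ndp; rewrite -RSd; split.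
  - by have [_ nRS] := hG p Wp; exfalso; apply: nRS; left.
have HAS : forall W p, O W -> W p -> range iS p -> W `<=` range iS.
  move=> W p OW Wp Sp q Wq; case: (finer W OW) => [hd|[hR|[hS|hG]]].
  - by move: (hd q Wq); case: q {Wq} => a b; rewrite /diag /= => ->; exact: rS.
  - by have [Rp ndp] := hR p Wp; exfalso; apply: ndp; rewrite -RSd; split.
  - exact: (hS q Wq).1.
  - by have [_ nRS] := hG p Wp; exfalso; apply: nRS; right.
have dec1 : forall x z, gen_eqrel (range iR `|` range iS) (x, z) ->
    exists y, range iR (x, y) /\ range iS (y, z).
  by move=> x z /gchar.
have dec2 : forall x z, gen_eqrel (range iR `|` range iS) (x, z) ->
    exists y, range iS (x, y) /\ range iR (y, z).
  by move=> x z /gchar [y [Rxy Syz]]; exact: RSSR Rxy Syz.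
have um1 := uniq_mid eR eS RSd.
have um2 := uniq_mid eS eR SRd.
split.
  move=> U OU; split.
    exact: (decomp ne dis cov cl HAR HAS dec1 um1 RE SE OU).
  exact: (decomp ne dis cov cl HAS HAR dec2 um2 SE RE OU).
have [uR [cuR huR]] := unit_cont ER.
have [uS [cuS huS]] := unit_cont ES.
split.
- apply: (restrict (phi := fun g => (g, uS (iR g).2)) (psi := fst) GP eR RE HAR).
  + move=> g; apply: cvg_pair => //.
    have H0 := t_cont ER. have H1 : {for g, continuous (fun g0 : GR => (iR g0).2)} by exact: H0.
    have H2 : {for (iR g).2, continuous uS} by exact: cuS.
    exact: (continuous_comp H1 H2).
  + by move=> p; exact: cvg_fst.
  + by move=> g; rewrite /fibprod /= huS.
  + by [].
  + by move=> g; rewrite /fibmul /fr /fs /= huS -surjective_pairing.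
  + move=> [g s]; rewrite /fibprod /fibmul /fr /fs /= => e Rxz.
    congr pair; apply: iSinj; rewrite huS [RHS]surjective_pairing -e.
    congr pair.
    have Ry : range iR ((iR g).2, (iS s).2).
      by apply: tR Rxz; apply: sR; exists g => //; rewrite -surjective_pairing.
    have Sy : range iS ((iR g).2, (iS s).2).
      by exists s => //; rewrite e -surjective_pairing.
    have : (range iR `&` range iS) ((iR g).2, (iS s).2) by split.
    by rewrite RSd.
  + exact: r_cont ER.
  + exact: t_cont ER.
- apply: (restrict (phi := fun s => (uR (iS s).1, s)) (psi := snd) GP eS SE HAS).
  + move=> s; apply: cvg_pair => //.
    have H0 := r_cont ES. have H1 : {for s, continuous (fun g0 : GS => (iS g0).1)} by exact: H0.
    have H2 : {for (iS s).1, continuous uR} by exact: cuR.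
    exact: (continuous_comp H1 H2).
  + by move=> p; exact: cvg_snd.
  + by move=> s; rewrite /fibprod /= huR.
  + by [].
  + by move=> s; rewrite /fibmul /fr /fs /= huR /= -surjective_pairing.
  + move=> [g s]; rewrite /fibprod /fibmul /fr /fs /= => e Sxz.
    congr pair; apply: iRinj; rewrite huR [RHS]surjective_pairing e.
    congr pair.
    have Sy : range iS ((iR g).1, (iS s).1).
      by apply: (tS _ _ _ Sxz); apply: sS; exists s => //; exact: surjective_pairing.
    have Ry : range iR ((iR g).1, (iS s).1).
      by exists g => //; rewrite -e; exact: surjective_pairing.
    have : (range iR `&` range iS) ((iR g).1, (iS s).1) by split.
    by rewrite RSd; rewrite /diag /= => ->.
  + exact: r_cont ES.
  + exact: t_cont ES.
Qed.
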